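(* For $n\ge 0$ let $h_n$ denote the number of matching coalescent histories of the lodgepole species tree $\lambda_n$ (for $n\ge 1$), with the convention $h_0=1$. Then for all $n\ge 1$, $$h_n=(2n+1)!!-\sum_{k=0}^{n-1}(2k+1)!!\,h_{n-1-k}.$$ Moreover, for all $n\ge 1$, $$(2n+1)!!\left(\frac{n-2}{n}\right)\le h_n\le (2n+1)!!,$$ and asymptotically, as $n\to\infty$, $$h_n\sim(2n+1)!!\sim\sqrt{2}\left[\frac{2(n+1)}{e}\right]^{n+1}.$$
   Context: A species tree is a rooted binary tree whose leaves carry distinct labels. Each node $v$ of a tree $t$ has a branch directly above it: for a non-root node this is the edge joining $v$ to its parent, and the root additionally has a root branch above it. A leaf $x$ descends from a branch if $x$ lies in the subtree below that branch (i.e. below the node at the lower end of the branch, including that node). A branch $b'$ is descended from a branch $b$ if the node at the lower end of $b'$ lies in the subtree below $b$. Given a species tree $t$, a matching coalescent history of $t$ is a map $h$ from the set of internal nodes of $t$ to the set of branches of $t$ such that: (a) for every leaf $x$ and every internal node $k$, if $x$ descends from $k$ in $t$ then $x$ descends from the branch $h(k)$; (b) for all internal nodes $k_1,k_2$, if $k_2$ is a descendant of $k_1$ then the branch $h(k_2)$ is descended from or coincides with the branch $h(k_1)$. The lodgepole family $(\lambda_n)_{n\ge0}$ is defined by: $\lambda_0$ is the tree with one leaf, and for $n\ge 0$, $\lambda_{n+1}$ is obtained by attaching $\lambda_n$ and a cherry (a tree with exactly two leaves) as the two child subtrees of a new common root. Thus $\lambda_n$ has $2n+1$ leaves (labeled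 arbitrarily). Here $(2n+1)!!=(2n+1)(2n-1)\cdots 3\cdot 1$, and $a_n\sim b_n$ means $a_n/b_n\to1$. *)

(* Defs.v *)
From HB Require Import structures.
From mathcomp Require Import all_boot all_order all_algebra.
From mathcomp Require Import all_classical all_reals all_analysis.
Set Implicit Arguments. Unset Strict Implicit. Unset Printing Implicit Defensive.

(* Rooted binary trees (shapes; leaf labels are irrelevant for counting,
   distinct labels just identify leaves, here identified by their position). *)
Inductive btree := BLeaf | BNode of btree & btree.

(* Nodes are addressed by their path from the root (false = left, true = right). *)
Fixpoint nodes (t : btree) : seq (seq bool) :=
  match t with
  | BLeaf => [:: [::]]
  | BNode l r => [::] :: (map (cons false) (nodes l) ++ map (cons true) (nodes r))
  end.

Fixpoint leaves (t : btree) : seq (seq bool) :=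
  match t with
  | BLeaf => [:: [::]]
  | BNode l r => map (cons false) (leaves l) ++ map (cons true) (leaves r)
  end.

Fixpoint internals (t : btree) : seq (seq bool) :=
  match t with
  | BLeaf => [::]
  | BNode l r => [::] :: (map (cons false) (internals l) ++ map (cons true) (internals r))
  end.

(* Every node v has exactly one branch above it (the root branch for the root),
   so branches are identified with nodes. *)
Definition below (v w : seq bool) : bool := seq.prefix v w.

Definition internal_t (t : btree) := seq_sub (internals t).
Definition branch_t (t : btree) := seq_sub (nodes t).
Definition leaf_t (t : btree) := seq_sub (leaves t).

Definition matching_history (t : btree) (h : {ffun internal_t t -> branch_t t}) : bool :=
  [forall k : internal_t t, forall x : leaf_t t,
      below (val k) (val x) ==> below (val (h k)) (val x)]
  && [forall k1 : internal_t t, forall k2 : internal_t t,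
      below (val k1) (val k2) ==> below (val (h k1)) (val (h k2))].

Definition num_histories (t : btree) : nat :=
  #|[pred h : {ffun internal_t t -> branch_t t} | matching_history h]|.

Definition cherry := BNode BLeaf BLeaf.

Fixpoint lodgepole (n : nat) : btree :=
  match n with
  | 0 => BLeaf
  | n'.+1 => BNode (lodgepole n') cherry
  end.

Definition hlodge (n : nat) : nat :=
  if n is 0 then 1 else num_histories (lodgepole n).

Fixpoint dfact (m : nat) : nat :=
  match m with
  | 0 => 1
  | 1 => 1
  | (m'.+2) as k => k * dfact m'
  end.

(* Main.v *)
Require Import Defs.
From HB Require Import structures.
From mathcomp Require Import all_boot all_order all_algebra.
From mathcomp Require Import all_classical all_reals all_analysis.
Import Order.TTheory GRing.Theory Num.Theory.
Import numFieldNormedType.Exports.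
Local Open Scope classical_set_scope.
Local Open Scope ring_scope.
From mathcomp Require Import zify ring lra.
Set Implicit Arguments. Unset Strict Implicit. Unset Printing Implicit Defensive.

Section Comb.
Local Open Scope nat_scope.
Lemma leaves_ex t : exists x, x \in leaves t.
Proof.
elim: t => [|l [x Hx] r _]; first by exists [::]; rewrite inE.
by exists (false :: x); rewrite /= mem_cat map_f.
Qed.

Lemma internal_leaves t k : k \in internals t ->
  (exists x, k ++ false :: x \in leaves t) /\ (exists y, k ++ true :: y \in leaves t).
Proof.
elim: t k => [|l IHl r IHr] k //=.
rewrite inE mem_cat => /orP[/eqP->|/orP[]/mapP[k' Hk' ->]].
- have [x Hx] := leaves_ex l; have [y Hy] := leaves_ex r.
  split; [exists x|exists y]; rewrite /= mem_cat; apply/orP; [left|right]; exact: map_f.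
- have [[x Hx] [y Hy]] := IHl _ Hk'.
  split; [exists x|exists y]; rewrite /= mem_cat; apply/orP; left; exact: (map_f (cons false)).
- have [[x Hx] [y Hy]] := IHr _ Hk'.
  split; [exists x|exists y]; rewrite /= mem_cat; apply/orP; right; exact: (map_f (cons true)).
Qed.

Lemma prefix_both v k x y : seq.prefix v (k ++ false :: x) ->
  seq.prefix v (k ++ true :: y) -> seq.prefix v k.
Proof.
elim: k v => [|c k IH] [|b v] //=.
- by move=> /andP[/eqP-> _] /andP[].
- by move=> /andP[/eqP-> H1] /andP[_ H2]; rewrite eqxx (IH _ H1 H2).
Qed.

Lemma internal_prefix_node t k v : k \in internals t -> seq.prefix v k -> v \in nodes t.
Proof.
elim: t k v => [|l IHl r IHr] k v //=.
rewrite inE mem_cat => /orP[/eqP->|/orP[]/mapP[k' Hk' ->]].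
- by rewrite prefixs0 => /eqP->; rewrite inE eqxx.
- case: v => [|b v]; first by rewrite inE eqxx.
  rewrite prefix_cons => /andP[/eqP-> Hv].
  rewrite inE mem_cat; apply/orP; right; apply/orP; left.
  exact: (map_f (cons false)) (IHl _ _ Hk' Hv).
- case: v => [|b v]; first by rewrite inE eqxx.
  rewrite prefix_cons => /andP[/eqP-> Hv].
  rewrite inE mem_cat; apply/orP; right; apply/orP; right.
  exact: (map_f (cons true)) (IHr _ _ Hk' Hv).
Qed.

Definition blk (s j : nat) (ll lr : seq (seq nat)) : seq (seq nat) :=
  [seq (s - j) :: (map (addn (s - j)) p.1 ++ map (addn (s - j)) p.2)
     | p <- [seq (x, y) | x <- ll, y <- lr]].

Fixpoint Dl (t : btree) (s : nat) : seq (seq nat) :=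
  match t with
  | BLeaf => [:: [::]]
  | BNode l r => flatten [seq blk s j (Dl l j.+1) (Dl r j.+1) | j <- iota 0 s.+1]
  end.

Definition VF t s (f : seq bool -> nat) :=
  all (fun k => f k <= size k + s) (internals t) &&
  all (fun k1 => all (fun k2 => seq.prefix k1 k2 ==> (f k1 <= f k2)) (internals t))
      (internals t).

Definition fnode (c : nat) (fl fr : seq bool -> nat) (k : seq bool) : nat :=
  match k with [::] => c | b :: k' => c + (if b then fr k' else fl k') end.

Lemma VF_intro l r s c fl fr : c <= s -> VF l (s - c).+1 fl -> VF r (s - c).+1 fr ->
  VF (BNode l r) s (fnode c fl fr).
Proof.
move=> cs /andP[/allP Bl /allP Ml] /andP[/allP Br /allP Mr].
apply/andP; split; apply/allP => k /=; rewrite inE mem_cat =>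
  /orP[/eqP->|/orP[]/mapP[k' Hk' ->]] /=.
- lia.
- by have := Bl _ Hk'; lia.
- by have := Br _ Hk'; lia.
- rewrite leqnn /=; apply/allP => k2; rewrite mem_cat => /orP[]/mapP[k2' _ ->] /=; lia.
- apply/allP => k2; rewrite mem_cat => /orP[]/mapP[k2' Hk2' ->] //=.
  rewrite leq_add2l; exact: (allP (Ml _ Hk')).
- apply/allP => k2; rewrite mem_cat => /orP[]/mapP[k2' Hk2' ->] //=.
  rewrite leq_add2l; exact: (allP (Mr _ Hk')).
Qed.

Lemma VF_elim l r s f : VF (BNode l r) s f ->
  [/\ f [::] <= s,
      {in internals l, forall k, f [::] <= f (false :: k)},
      {in internals r, forall k, f [::] <= f (true :: k)},
      VF l (s - f [::]).+1 (fun k => f (false :: k) - f [::]) &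
      VF r (s - f [::]).+1 (fun k => f (true :: k) - f [::])].
Proof.
move=> /andP[/allP B /allP M].
have Hin : [::] \in internals (BNode l r) by rewrite inE eqxx.
have inl k : k \in internals l -> false :: k \in internals (BNode l r).
  by move=> Hk; rewrite /= inE mem_cat (map_f (cons false) Hk) orbT.
have inr k : k \in internals r -> true :: k \in internals (BNode l r).
  by move=> Hk; rewrite /= inE mem_cat (map_f (cons true) Hk) !orbT.
have r0 k : k \in internals (BNode l r) -> f [::] <= f k.
  by move=> Hk; have := allP (M _ Hin) _ Hk; rewrite prefix0s.
have hs := B _ Hin.
split => //.
- by move=> k /inl /r0.
- by move=> k /inr /r0.
- apply/andP; split; apply/allP => k Hk /=.
  + by have := B _ (inl _ Hk); rewrite /=; lia.
  + apply/allP => k2 Hk2; apply/implyP => pk.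
    have := implyP (allP (M _ (inl _ Hk)) _ (inl _ Hk2)); rewrite /= pk => /(_ isT) H.
    lia.
- apply/andP; split; apply/allP => k Hk /=.
  + by have := B _ (inr _ Hk); rewrite /=; lia.
  + apply/allP => k2 Hk2; apply/implyP => pk.
    have := implyP (allP (M _ (inr _ Hk)) _ (inr _ Hk2)); rewrite /= pk => /(_ isT) H.
    lia.
Qed.

Lemma Dl_mem t s ds : ds \in Dl t s <-> exists f, ds = map f (internals t) /\ VF t s f.
Proof.
elim: t s ds => [|l IHl r IHr] s ds.
  rewrite /= inE; split => [/eqP->|[f [-> _]]] //; by exists (fun _ => 0).
split.
- move=> /flatten_mapP[j Hj] /mapP[[x y] /allpairsP[[x' y'] [/= Hx Hy [-> ->]]] ->].
  have [fl [-> Vl]] := (IHl _ _).1 Hx.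
  have [fr [-> Vr]] := (IHr _ _).1 Hy.
  have js : j <= s by move: Hj; rewrite mem_iota; lia.
  exists (fnode (s - j) fl fr); split.
    by rewrite /= map_cat -!map_comp.
  by apply: VF_intro; rewrite ?subKn //; lia.
- move=> [f [-> V]]; have [f0s f0l f0r Vl Vr] := VF_elim V.
  apply/flatten_mapP; exists (s - f [::]); first by rewrite mem_iota; lia.
  rewrite /blk subKn //.
  apply/mapP; exists (map (fun k => f (false :: k) - f [::]) (internals l),
                      map (fun k => f (true :: k) - f [::]) (internals r)).
    by apply: allpairs_f; [apply/IHl|apply/IHr]; eexists; split;
      [reflexivity|eassumption|reflexivity|eassumption].
  rewrite /= map_cat -!map_comp; congr (_ :: _ ++ _); apply/eq_in_map => k Hk /=.
    by rewrite subnKC // f0l.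
  by rewrite subnKC // f0r.
Qed.

Lemma Dl_size t s x : x \in Dl t s -> size x = size (internals t).
Proof. by move=> /Dl_mem[f [-> _]]; rewrite size_map. Qed.

Lemma uniq_flatten_key (js : seq nat) (B : nat -> seq (seq nat)) (key : seq nat -> nat) :
  uniq js -> {in js, forall j, uniq (B j)} -> {in js, forall j x, x \in B j -> key x = j} ->
  uniq (flatten [seq B j | j <- js]).
Proof.
elim: js => //= j js IH /andP[jn Ujs] UB KB.
rewrite cat_uniq UB ?mem_head //= IH //; first last.
- by move=> j' Hj'; apply: KB; rewrite inE Hj' orbT.
- by move=> j' Hj'; apply: UB; rewrite inE Hj' orbT.
rewrite andbT; apply/hasPn => x /flatten_mapP[j' Hj' Hx']; apply/negP => Hx.
have E1 := KB j (mem_head _ _) x Hx.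
have E2 : key x = j' by apply: KB Hx'; rewrite inE Hj' orbT.
by move: jn; rewrite -E1 E2 Hj'.
Qed.

Lemma Dl_uniq t s : uniq (Dl t s).
Proof.
elim: t s => [|l IHl r IHr] s //.
change (uniq (flatten [seq blk s j (Dl l j.+1) (Dl r j.+1) | j <- iota 0 s.+1])).
apply: (@uniq_flatten_key _ (fun j => blk s j (Dl l j.+1) (Dl r j.+1))
  (fun x => s - head 0 x)).
- exact: iota_uniq.
- move=> j _; rewrite /blk map_inj_in_uniq ?allpairs_uniq //.
    by move=> [? ?] [? ?] _ _ /= [-> ->].
  move=> [x1 y1] [x2 y2] /allpairsP[[a b] [/= Ha Hb [-> ->]]].
  move=> /allpairsP[[c d] [/= Hc Hd [-> ->]]] /= [].
  move/eqP; rewrite eqseq_cat ?size_map ?(Dl_size Ha) ?(Dl_size Hc) //.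
  move=> /andP[/eqP E1 /eqP E2].
  by rewrite (inj_map (@addnI _) E1) (inj_map (@addnI _) E2).
- move=> j Hj x /mapP[p _ ->] /=; move: Hj; rewrite mem_iota; lia.
Qed.

Lemma Dl_size_node l r s :
  size (Dl (BNode l r) s) = \sum_(j < s.+1) size (Dl l j.+1) * size (Dl r j.+1).
Proof.
change (size (flatten [seq blk s j (Dl l j.+1) (Dl r j.+1) | j <- iota 0 s.+1]) =
  \sum_(j < s.+1) size (Dl l j.+1) * size (Dl r j.+1)).
rewrite size_flatten /shape -map_comp sumnE big_map.
rewrite -(big_mkord xpredT (fun j => size (Dl l j.+1) * size (Dl r j.+1))).
rewrite /index_iota subn0; apply: eq_bigr => j _.
by rewrite /= /blk size_map size_allpairs.
Qed.

Lemma prefix_sizeE (a b c : seq bool) : seq.prefix a c -> seq.prefix b c ->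
  seq.prefix a b = (size a <= size b).
Proof.
elim: c a b => [|z c IH] [|x a] [|y b] //=.
by move=> /andP[/eqP-> Ha] /andP[/eqP-> Hb]; rewrite eqxx IH.
Qed.

Lemma take_prefix_eq (a c : seq bool) : seq.prefix a c -> a = take (size a) c.
Proof. by rewrite prefixE => /eqP. Qed.

Lemma prefix_take_take a b (s : seq bool) : a <= b -> seq.prefix (take a s) (take b s).
Proof. by move=> ab; rewrite -(take_takel _ ab) prefix_take. Qed.

Lemma hist_prefix t (h : {ffun internal_t t -> branch_t t}) (k : internal_t t) :
  matching_history h -> seq.prefix (val (h k)) (val k).
Proof.
move=> /andP[/forallP Ha _].
have [[x Hx] [y Hy]] := internal_leaves (ssvalP k).
have H1 := implyP (forallP (Ha k) (SeqSub Hx)) (prefix_prefix _ _).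
have H2 := implyP (forallP (Ha k) (SeqSub Hy)) (prefix_prefix _ _).
exact: prefix_both H1 H2.
Qed.

Lemma hist_mono t (h : {ffun internal_t t -> branch_t t}) (k1 k2 : internal_t t) :
  matching_history h -> seq.prefix (val k1) (val k2) ->
  seq.prefix (val (h k1)) (val (h k2)).
Proof. by move=> /andP[_ /forallP Hb] H; exact: implyP (forallP (Hb k1) k2) H. Qed.

Definition phi t (h : {ffun internal_t t -> branch_t t}) : seq nat :=
  [seq (if @insub _ _ (internal_t t) k is Some x then size (val (h x)) else 0)
    | k <- internals t].

Lemma num_hist_Dl t : num_histories t = size (Dl t 0).
Proof.
rewrite /num_histories cardE -(size_map (@phi t)).
apply/perm_size/uniq_perm.
- rewrite map_inj_in_uniq ?enum_uniq // => h1 h2; rewrite !mem_enum /= => H1 H2 E.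
  apply/ffunP => x; apply: val_inj.
  have := (eq_in_map _ _ _).2 E (val x) (ssvalP x); rewrite valK => Es.
  rewrite (take_prefix_eq (hist_prefix x H1)) (take_prefix_eq (hist_prefix x H2)).
  by rewrite Es.
- exact: Dl_uniq.
move=> ds; apply/idP/idP => [/mapP[h Hh ->]|/Dl_mem[f [-> V]]].
  rewrite mem_enum /= in Hh.
  apply/Dl_mem; eexists; split; first reflexivity.
  apply/andP; split; apply/allP => k Hk.
    case: insubP => [x _ <-|/negP//]; rewrite addn0; exact/size_prefix/hist_prefix.
  apply/allP => k2 Hk2; apply/implyP => pk.
  case: insubP => [x _ Ex|/negP//]; case: insubP => [y _ Ey|/negP//].
  have Hxy : seq.prefix (val x) (val y) by rewrite Ex Ey.
  rewrite -(prefix_sizeE (prefix_trans (hist_prefix x Hh) Hxy) (hist_prefix y Hh)).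
  exact: hist_mono Hh Hxy.
have Hn (x : internal_t t) : take (f (val x)) (val x) \in nodes t.
  exact: internal_prefix_node (ssvalP x) (prefix_take _ _).
move: V => /andP[/allP Bd /allP Md].
apply/mapP; exists [ffun x : internal_t t => (SeqSub (Hn x) : branch_t t)].
  rewrite mem_enum /=; apply/andP; split; apply/forallP => k; apply/forallP => x;
    apply/implyP => Hkx; rewrite !ffunE /=.
    exact: prefix_trans (prefix_take _ _) Hkx.
  have Hk1 := ssvalP k; have Hk2 := ssvalP x.
  have f12 := implyP (allP (Md _ Hk1) _ Hk2) Hkx.
  have f1 := Bd _ Hk1; rewrite addn0 in f1.
  rewrite /below {2}(take_prefix_eq Hkx) take_takel //.
  exact: prefix_take_take.
apply/eq_in_map => k Hk; case: insubP => [x _ Ex|/negP//].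
rewrite ffunE /= size_take; subst k.
have := Bd _ Hk; rewrite addn0 leq_eqVlt => /orP[/eqP->|->]; last by [].
by rewrite ltnn.
Qed.
Fixpoint Gf n s := if n is n'.+1 then \sum_(i < s) i.+2 * Gf n' i.+2 else 1.
Fixpoint Kf n s := if n is n'.+1 then \sum_(i < s.+1) i.+1 * Kf n' i.+1 else 1.

Lemma KG n s : Kf n s = Gf n s + \sum_(j < n) Gf j s * Kf (n - j.+1) 1.
Proof.
elim: n s => [|n IH] s; first by rewrite big_ord0 addn0.
rewrite /= big_ord_recl [in RHS]big_ord_recl /= !mul1n.
have -> : \sum_(i < s) (bump 0 i).+1 * Kf n (bump 0 i).+1 =
   \sum_(i < s) i.+2 * Gf n i.+2 +
   \sum_(j < n) (\sum_(i < s) i.+2 * Gf j i.+2) * Kf (n - j.+1) 1.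
  transitivity (\sum_(i < s) (i.+2 * Gf n i.+2 +
     \sum_(j < n) i.+2 * Gf j i.+2 * Kf (n - j.+1) 1)).
    apply: eq_bigr => i _; rewrite IH mulnDr big_distrr /=; congr (_ + _).
    by apply: eq_bigr => j _; rewrite mulnA.
  rewrite big_split /=; congr (_ + _); rewrite exchange_big /=.
  by apply: eq_bigr => j _; rewrite big_distrl.
rewrite subn1 /= addnCA; congr (_ + (_ + _)).
Qed.

Lemma sum_bin n s :
  \sum_(i < s.+1) i.+1 * 'C(i.+1 + 2 * n, 2 * n) = (2 * n).+1 * 'C(s.+2 + 2 * n, (2 * n).+2).
Proof.
elim: s => [|s IH].
  by rewrite big_ord1 mul1n add1n binSn add2n binn muln1.
rewrite big_ord_recr /= IH.
have -> : s.+3 + 2 * n = (s.+2 + 2 * n).+1 by lia.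
rewrite [in RHS]binS mulnDr; congr (_ + _).
rewrite mul_bin_left; congr (_ * _); lia.
Qed.

Lemma dfactS n : dfact (2 * n).+1 = (2 * n).+1 * dfact (2 * n - 1).
Proof.
case: n => [|n] //.
have -> : (2 * n.+1).+1 = (2 * n).+1.+2 by lia.
have -> : 2 * n.+1 - 1 = (2 * n).+1 by lia.
by [].
Qed.

Lemma Kf_closed n s : Kf n s = dfact (2 * n - 1) * 'C(s + 2 * n, 2 * n).
Proof.
elim: n s => [|n IH] s; first by rewrite muln0 bin0.
rewrite /=; under eq_bigr => i _ do rewrite IH mulnCA.
rewrite -big_distrr /= sum_bin.
have -> : 2 * n.+1 - 1 = (2 * n).+1 by lia.
rewrite dfactS mulnA [dfact _ * _]mulnC.
have -> : s + 2 * n.+1 = s.+2 + 2 * n by lia.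
by have -> : 2 * n.+1 = (2 * n).+2 by lia.
Qed.

Lemma Kf1 n : Kf n 1 = dfact (2 * n).+1.
Proof. by rewrite Kf_closed add1n binSn dfactS mulnC. Qed.

Lemma Fcherry s : size (Dl cherry s) = s.+1.
Proof.
rewrite Dl_size_node /=; under eq_bigr => j _ do rewrite muln1.
by rewrite big_const_ord iter_addn_0 mul1n.
Qed.

Lemma Gf_lodge n s : Gf n s.+1 = size (Dl (lodgepole n) s).
Proof.
elim: n s => [|n IH] s //.
change (lodgepole n.+1) with (BNode (lodgepole n) cherry); rewrite Dl_size_node.
by apply: eq_bigr => i _; rewrite -/(Gf n i.+2) IH Fcherry mulnC.
Qed.

Lemma hlodge_Gf n : hlodge n = Gf n 1.
Proof. by case: n => [|n] //; rewrite /hlodge num_hist_Dl Gf_lodge. Qed.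

Definition af k := dfact (2 * k).+1.
Arguments af : simpl never.
Arguments af : simpl never.

Lemma rec_nat n : af n = hlodge n + \sum_(k < n) af k * hlodge (n - 1 - k).
Proof.
rewrite /af -Kf1 KG hlodge_Gf; congr (_ + _).
rewrite (reindex_inj rev_ord_inj) /=; apply: eq_bigr => j _.
rewrite Kf1 -hlodge_Gf mulnC; congr (_ * _).
  by have -> : n - (n - j.+1).+1 = j by have := ltn_ord j; lia.
by congr hlodge; have := ltn_ord j; lia.
Qed.

Lemma h_le_af n : hlodge n <= af n.
Proof. by rewrite rec_nat leq_addr. Qed.

Lemma afS k : af k.+1 = (2 * k).+3 * af k.
Proof. by rewrite /af; have -> : (2 * k.+1).+1 = (2 * k).+1.+2 by lia. Qed.

Lemma LC x y d : y <= x -> af x * af (y + d) <= af (x + d) * af y.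
Proof.
move=> yx; elim: d => [|d IH]; first by rewrite !addn0 mulnC.
rewrite !addnS !afS mulnCA -!mulnA; apply: leq_mul; first lia.
exact: IH.
Qed.

Lemma mid_term m j : 0 < j < m -> (2 * m).+1 * (af j * af (m - j)) <= 3 * af m.
Proof.
move=> /andP[j0 jm].
have H := @LC (m - j) 1 j.-1 ltac:(lia).
have E1 : 1 + j.-1 = j by lia.
have E2 : m - j + j.-1 = m.-1 by lia.
rewrite E1 E2 in H.
have Ham : af m = (2 * m).+1 * af m.-1.
  by rewrite -[in LHS](prednK (ltn_trans j0 jm)) afS; congr (_ * _); lia.
have a1 : af 1 = 3 by [].
rewrite a1 in H; rewrite Ham; nia.
Qed.

Lemma Csum_bound m :
  (2 * m).+1 * \sum_(j < m.+1) af j * af (m - j) <= (2 * (2 * m).+1 + 3 * m) * af m.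
Proof.
case: m => [|m]; first by rewrite big_ord1.
rewrite -(big_mkord xpredT (fun j => af j * af (m.+1 - j))).
rewrite big_nat_recl // big_nat_recr // subn0 subnn.
have a0 : af 0 = 1 by [].
rewrite a0 mul1n muln1.
have Hmid : (2 * m.+1).+1 * \sum_(0 <= i < m) af i.+1 * af (m.+1 - i.+1) <= 3 * m * af m.+1.
  rewrite big_distrr /=.
  apply: (@leq_trans (\sum_(0 <= i < m) 3 * af m.+1)).
    rewrite big_nat [X in _ <= X]big_nat; apply: leq_sum => i /andP[_ im].
    by apply: mid_term; lia.
  rewrite big_const_nat iter_addn_0 subn0; nia.
set X := af m.+1 in Hmid *.
set Y := \sum_(0 <= i < m) _ in Hmid *.
have -> : ssrnat_addn__canonical__Monoid_Law Y X = Y + X by [].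
nia.
Qed.

Lemma lower_nat n : 0 < n -> n * \sum_(k < n) af k * hlodge (n - 1 - k) <= 2 * af n.
Proof.
case: n => [//|m] _.
have HS : \sum_(k < m.+1) af k * hlodge (m.+1 - 1 - k) <= \sum_(j < m.+1) af j * af (m - j).
  apply: leq_sum => k _; rewrite leq_mul2l (_ : m.+1 - 1 - k = m - k) ?h_le_af ?orbT //.
  lia.
have HC := Csum_bound m.
rewrite afS.
set S := \sum_(k < m.+1) _ in HS *.
set C := \sum_(j < m.+1) _ in HS HC *.
set X := af m in HC *.
rewrite -(@leq_pmul2l (2 * m).+1) //.
apply: (@leq_trans (m.+1 * ((2 * m).+1 * C))); first by nia.
apply: (@leq_trans (m.+1 * ((2 * (2 * m).+1 + 3 * m) * X))); first by rewrite leq_mul2l HC orbT.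
rewrite !mulnA; apply: leq_mul => //; nia.
Qed.

End Comb.

Section Anal.
Variable R : realType.

Lemma mvt_nonneg (g dg : R -> R) (y : R) : 0 <= y ->
  (forall x : R, 0 <= x -> is_derive x 1 g (dg x)) -> (forall x : R, 0 <= x -> 0 <= dg x) ->
  g 0 <= g y.
Proof.
move=> y0 Hd Hp.
have Hd' : forall x, x \in `]0, y[ -> is_derive x 1 g (dg x).
  by move=> x; rewrite in_itv /= => /andP[/ltW x0 _]; exact: Hd.
have Hc' : {within `[0, y], continuous g}.
  apply: derivable_within_continuous => x; rewrite in_itv /= => /andP[x0 _].
  by case: (Hd x x0).
have [c Hc E] := MVT_segment y0 Hd' Hc'.
rewrite -subr_ge0 E subr0 mulr_ge0 //; apply: Hp.
by move: Hc; rewrite in_itv /= => /andP[].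
Qed.

Lemma ln_ub (y : R) : 0 <= y -> ln (1 + y) <= y - y ^+ 2 / 2 + y ^+ 3 / 3.
Proof.
move=> y0.
have := @mvt_nonneg (fun z => z - z ^+ 2 / 2 + z ^+ 3 / 3 - ln (1 + z))
  (fun x => x ^+ 3 / (1 + x)) y y0.
rewrite /= addr0 ln1 expr0n /= expr0n /= !mul0r subr0 addr0 subr0.
rewrite subr_ge0; apply.
- move=> x x0; have hx : 0 < 1 + x by lra.
  have H := is_derive1_ln hx.
  apply: trigger_derive; rewrite /GRing.scale /=; field; lra.
- by move=> x x0; apply: divr_ge0; [exact: exprn_ge0 | lra].
Qed.

Lemma ln_lb (y : R) : 0 <= y -> y - y ^+ 2 / 2 + y ^+ 3 / 3 - y ^+ 4 / 4 <= ln (1 + y).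
Proof.
move=> y0.
have := @mvt_nonneg (fun z => ln (1 + z) - (z - z ^+ 2 / 2 + z ^+ 3 / 3 - z ^+ 4 / 4))
  (fun x => x ^+ 4 / (1 + x)) y y0.
rewrite /= addr0 ln1 !expr0n /= !mul0r !subr0 addr0 subrr.
rewrite subr_ge0; apply.
- move=> x x0; have hx : 0 < 1 + x by lra.
  have H := is_derive1_ln hx.
  apply: trigger_derive; rewrite /GRing.scale /=; field; lra.
- by move=> x x0; apply: divr_ge0; [exact: exprn_ge0 | lra].
Qed.

Lemma dk_bound (y : R) : 0 < y <= 1 ->
  `|(y^-1 + 2^-1) * ln (1 + y) - 1| <= y ^+ 2 / 4.
Proof.
move=> /andP[y0 y1].
have U := @ln_ub y (ltW y0); have L := @ln_lb y (ltW y0).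
set l := ln (1 + y) in U L *.
have E : (y^-1 + 2^-1) * l - 1 = ((2 + y) * l - 2 * y) / (2 * y).
  by field; lra.
have K : `|(2 + y) * l - 2 * y| <= y ^+ 3 / 2.
  have y3 : 0 <= y ^+ 3 by apply: exprn_ge0; lra.
  have U' : (2 + y) * l <= (2 + y) * (y - y ^+ 2 / 2 + y ^+ 3 / 3).
    by rewrite ler_wpM2l //; lra.
  have L' : (2 + y) * (y - y ^+ 2 / 2 + y ^+ 3 / 3 - y ^+ 4 / 4) <= (2 + y) * l.
    by rewrite ler_wpM2l //; lra.
  have A1 : (2 + y) * (y - y ^+ 2 / 2 + y ^+ 3 / 3) - 2 * y <= y ^+ 3 / 2 by nra.
  have A2 : - (y ^+ 3 / 2) <= (2 + y) * (y - y ^+ 2 / 2 + y ^+ 3 / 3 - y ^+ 4 / 4) - 2 * y.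
    nra.
  rewrite ler_norml; apply/andP; split; lra.
rewrite E normrM normfV (ger0_norm (_ : 0 <= 2 * y)); last lra.
rewrite ler_pdivrMr; last lra.
apply: (le_trans K); rewrite le_eqVlt; apply/orP; left; apply/eqP; field.
by [].
Qed.

Definition u (k : nat) : R := ln (k`!%:R) + k%:R - (k%:R + 2^-1) * ln k%:R.

Lemma u_diff k : (0 < k)%N -> u k - u k.+1 = (k%:R + 2^-1) * ln (1 + k%:R^-1) - 1.
Proof.
move=> k0.
have kp : 0 < k%:R :> R by rewrite ltr0n.
have E1 : ln ((k.+1)`!%:R : R) = ln (k.+1%:R) + ln (k`!%:R).
  by rewrite factS natrM lnM // posrE ltr0n ?fact_gt0.
have E2 : ln (1 + k%:R^-1 : R) = ln (k.+1%:R) - ln k%:R.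
  rewrite -ln_div ?posrE ?ltr0n //; congr ln; rewrite -natr1; field; lra.
rewrite /u E1 E2 -!natr1; ring.
Qed.

Lemma u_step k : (0 < k)%N -> `|u k - u k.+1| <= (k%:R ^-1) ^+ 2 / 4.
Proof.
move=> k0; rewrite u_diff //.
have kp : 0 < k%:R :> R by rewrite ltr0n.
have := @dk_bound (k%:R^-1); rewrite invrK; apply.
rewrite invr_gt0 kp /= invf_le1 // ler1n; lia.
Qed.

Lemma u_tel m : (0 < m)%N -> `|u m - u (2 * m)| <= (4 * m%:R)^-1.
Proof.
move=> m0.
have mp : 0 < m%:R :> R by rewrite ltr0n.
have T : u m - u (2 * m) = \sum_(m <= k < 2 * m) (u k - u k.+1).
  have := @telescope_sumr _ m (2 * m) (fun k => - u k) ltac:(lia).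
  under eq_bigr do rewrite opprK addrC.
  by move=> ->; rewrite opprK addrC.
rewrite T; apply: le_trans (ler_norm_sum _ _ _) _.
apply: (@le_trans _ _ (\sum_(m <= k < 2 * m) (m%:R ^-1) ^+ 2 / 4)).
  rewrite big_nat [X in _ <= X]big_nat; apply: ler_sum => k /andP[mk _].
  have k0 : (0 < k)%N by lia.
  apply: le_trans (@u_step k k0) _.
  rewrite ler_pM2r // ler_sqr ?nnegrE ?invr_ge0 ?ler0n //.
  by rewrite lef_pV2 ?posrE ?ltr0n ?ler_nat //; lia.
rewrite sumr_const_nat -mulr_natr.
have -> : (2 * m - m)%N = m by lia.
by rewrite le_eqVlt; apply/orP; left; apply/eqP; field; lra.
Qed.

Lemma cvg_bound (v : nat -> R) (l C : R) : 0 <= C ->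
  (forall n, (0 < n)%N -> `|v n - l| <= C / n%:R) -> v @ \oo --> l.
Proof.
move=> C0 H; apply/cvgrPdist_le => e e0.
have Ce : 0 <= C / e by apply: divr_ge0 => //; exact: ltW.
have HN := archi_boundP Ce.
near=> n.
have n0 : (0 < n)%N by near: n; exact: nbhs_infty_gt.
have nN : (Num.bound (C / e) <= n)%N by near: n; exact: nbhs_infty_ge.
rewrite distrC; apply: le_trans (H n n0) _.
have np : 0 < n%:R :> R by rewrite ltr0n.
rewrite ler_pdivrMr //.
have : C / e < n%:R by apply: lt_le_trans HN _; rewrite ler_nat.
rewrite ltr_pdivrMr // => /ltW; by rewrite mulrC.
Unshelve. all: by end_near.
Qed.

Lemma dfact_gt0 k : (0 < dfact k)%N.
Proof.
suff: ((0 < dfact k) && (0 < dfact k.+1))%N by case/andP.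
elim: k => [//|k /andP[H1 H2]]; rewrite H2 /=.
by rewrite muln_gt0 H1.
Qed.

Lemma dfactS' n : dfact (2 * n).+1 = ((2 * n).+1 * dfact (2 * n - 1))%N.
Proof.
case: n => [|n] //.
have -> : (2 * n.+1).+1 = (2 * n).+1.+2 by lia.
have -> : (2 * n.+1 - 1)%N = (2 * n).+1 by lia.
by [].
Qed.

Lemma fact_double m : (2 * m)`! = (2 ^ m * m`! * dfact (2 * m - 1))%N.
Proof.
elim: m => [//|m IH].
have -> : (2 * m.+1 = (2 * m).+2)%N by lia.
have -> : ((2 * m).+2 - 1 = (2 * m).+1)%N by lia.
rewrite !factS IH expnS dfactS'.
have -> : (2 * m).+2 = (2 * m.+1)%N by lia.
rewrite [(2 * m.+1)%N]mulnS. lia.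
Qed.

Lemma w_identity n :
  (dfact (2 * n + 1)%N)%:R / (Num.sqrt 2 * (2 * n.+1%:R / expR 1) ^+ n.+1)
  = expR (u (2 * n.+1) - u n.+1) :> R.
Proof.
set m := n.+1.
have -> : (2 * n + 1 = 2 * m - 1)%N by rewrite /m; lia.
set D := (dfact (2 * m - 1))%:R : R.
have Dp : 0 < D by rewrite ltr0n dfact_gt0.
have s2p : 0 < Num.sqrt 2 :> R by rewrite sqrtr_gt0.
have mp : 0 < m%:R :> R by rewrite ltr0n.
have ep : 0 < expR 1 :> R by exact: expR_gt0.
have qp : 0 < 2 * m%:R / expR 1 :> R by rewrite divr_gt0 // mulr_gt0.
have Qp : 0 < Num.sqrt 2 * (2 * m%:R / expR 1) ^+ m :> R.
  by rewrite mulr_gt0 // exprn_gt0.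
rewrite -[LHS]lnK; last by rewrite posrE divr_gt0.
congr expR.
rewrite ln_div ?posrE // lnM ?posrE ?exprn_gt0 // lnXn //.
rewrite ln_div ?posrE ?mulr_gt0 // expRK lnM ?posrE //.
have L2 : ln (Num.sqrt 2) = ln 2 / 2 :> R.
  have : ln (Num.sqrt 2 ^+ 2) = ln (2 : R) by rewrite sqr_sqrtr.
  by rewrite lnXn // => <-; rewrite -mulr_natr; field.
have F1 : ln ((2 ^ m * m`! * dfact (2 * m - 1))%:R : R) = ln 2 *+ m + ln (m`!%:R) + ln D.
  have fp : 0 < (m`!)%:R :> R by rewrite ltr0n fact_gt0.
  have tp : 0 < 2 ^+ m :> R by rewrite exprn_gt0.
  rewrite natrM (natrM R (2 ^ m)%N) natrX lnM ?posrE ?mulr_gt0 //.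
  by rewrite lnM ?posrE // lnXn.
have F2 : ln ((2 * m)%:R : R) = ln 2 + ln m%:R.
  by rewrite natrM lnM ?posrE ?ltr0n.
rewrite L2 /u (fact_double m) F1 F2 (natrM R 2 m).
move: (ln (2 : R)) (ln (m%:R : R)) (ln (m`!%:R : R)) (ln D) => a b c d.

ring.
Qed.


End Anal.

Lemma rec_real (R : realType) n :
  ((dfact (2 * n + 1)%N)%:R : R) =
  (hlodge n)%:R + \sum_(k < n) ((dfact (2 * k + 1)%N)%:R * (hlodge (n - 1 - k)%N)%:R).
Proof.
have E := rec_nat n; rewrite /af in E.
rewrite addn1 E natrD natr_sum; congr (_ + _).
by apply: eq_bigr => k _; rewrite natrM addn1.
Qed.

Lemma Sbound (R : realType) n : (1 <= n)%N ->
  n%:R * \sum_(k < n) ((dfact (2 * k + 1)%N)%:R * (hlodge (n - 1 - k)%N)%:R)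
  <= 2 * ((dfact (2 * n + 1)%N)%:R : R).
Proof.
move=> n1; have := lower_nat n1; rewrite -(ler_nat R) !natrM natr_sum /af addn1.
congr (_ * _ <= _); apply: eq_bigr => k _; by rewrite natrM addn1.
Qed.

Theorem proposition1 (R : realType) :
  (forall n : nat, (1 <= n)%N ->
     ((hlodge n)%:R : R) =
       (dfact (2 * n + 1)%N)%:R
       - \sum_(k < n) ((dfact (2 * k + 1)%N)%:R * (hlodge (n - 1 - k)%N)%:R))
  /\ (forall n : nat, (1 <= n)%N ->
     ((dfact (2 * n + 1)%N)%:R * ((n%:R - 2) / n%:R) <= ((hlodge n)%:R : R))
     /\ ((hlodge n)%:R <= ((dfact (2 * n + 1)%N)%:R : R)))
  /\ ((fun n : nat => ((hlodge n)%:R : R) / (dfact (2 * n + 1)%N)%:R) @ \oo --> (1 : R))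
  /\ ((fun n : nat => ((dfact (2 * n + 1)%N)%:R : R)
         / (Num.sqrt 2 * (2 * n.+1%:R / expR 1) ^+ n.+1)) @ \oo --> (1 : R)).
Proof.
have P1 : forall n : nat, ((hlodge n)%:R : R) =
       (dfact (2 * n + 1)%N)%:R
       - \sum_(k < n) ((dfact (2 * k + 1)%N)%:R * (hlodge (n - 1 - k)%N)%:R).
  by move=> n; rewrite rec_real addrK.
have Hup : forall n, ((hlodge n)%:R <= ((dfact (2 * n + 1)%N)%:R : R)).
  by move=> n; rewrite ler_nat addn1; exact: h_le_af.
have ap : forall n, 0 < ((dfact (2 * n + 1)%N)%:R : R).
  by move=> n; rewrite ltr0n addn1; exact: dfact_gt0.
split; first by move=> n _; exact: P1.
split.
  move=> n n1; split; last exact: Hup.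
  have np : 0 < n%:R :> R by rewrite ltr0n.
  rewrite P1.
  have := Sbound R n1.
  set S := \sum_(k < n) _; set a := (dfact _)%:R => H.
  have -> : a * ((n%:R - 2) / n%:R) = a - 2 * a / n%:R by field; lra.
  by rewrite lerD2l lerN2 ler_pdivlMr // mulrC.
split.
  apply: (@cvg_bound _ _ _ 2) => // n n0.
  have np : 0 < n%:R :> R by rewrite ltr0n.
  have := Sbound R n0.
  have := P1 n; have := ap n.
  set S := \sum_(k < n) _; set a := (dfact _)%:R; set h := (hlodge n)%:R => a0 hE H.
  have S0 : 0 <= S by rewrite sumr_ge0 // => k _; rewrite mulr_ge0 // ler0n.
  have -> : h / a - 1 = - (S / a) by rewrite hE; field; lra.
  rewrite normrN ger0_norm; last by rewrite divr_ge0 // ltW.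
  rewrite ler_pdivrMr // mulrAC ler_pdivlMr //.
  by rewrite mulrC.
pose v n := u R (2 * n.+1) - u R n.+1.
have vc : v @ \oo --> 0.
  apply: (@cvg_bound _ _ _ (4^-1)) => // n n0.
  have np : 0 < n%:R :> R by rewrite ltr0n.
  rewrite subr0 /v distrC; apply: le_trans (u_tel R (ltn0Sn n)) _.
  have h1 : 0 < 4 * n.+1%:R :> R by rewrite mulr_gt0 ?ltr0n.
  have h2 : 0 < 4 * n%:R :> R by rewrite mulr_gt0 ?ltr0n.
  rewrite -invfM lef_pV2 ?posrE //.
  by rewrite ler_pM2l ?ler_nat //; lra.
lazymatch goal with |- ?f @ \oo --> _ =>
  have E : f =1 expR \o v by move=> n; exact: w_identity end.
rewrite (@eq_cvg _ _ _ _ _ _ E).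
rewrite -expR0; apply: (@continuous_cvg _ _ _ _ _ v expR 0) => //.
exact: continuous_expR.
Qed.
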